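(* Let $(M,g)$ be an $n$-dimensional Lorentzian manifold with Levi-Civita connection $\nabla$, let $u$ be a unit timelike vector field ($u_pu^p=-1$), and let $A,B$ be smooth scalar fields with $B\neq 0$. The perfect fluid tensor $K_{jk}=Ag_{jk}+Bu_ju_k$ is a conformal Killing tensor if and only if (1) the velocity $u$ is shear-free ($\sigma_{ij}=0$), and (2) $H=\dfrac{\dot B}{2B}$ and $\nabla_jB=-\dot B\,u_j+2B\,\dot u_j$. In that case the conformal vector of $K$ is $\eta_j=\nabla_jA+\dot B\,u_j$, and the scalar field $A$ is unconstrained.
   Context: A symmetric tensor $K_{ij}$ on an $n$-dimensional pseudo-Riemannian manifold is a conformal Killing tensor (CKT) if $\nabla_iK_{jl}+\nabla_jK_{li}+\nabla_lK_{ij}=\eta_ig_{jl}+\eta_jg_{li}+\eta_lg_{ij}$ for some covector $\eta_i$; necessarily $\eta_i=\frac{\nabla_iK+2\nabla_jK^j{}_i}{n+2}$ with $K=g^{ij}K_{ij}$, and $\eta_i$ is called the conformal vector. For a scalar $f$, $\dot f=u^k\nabla_kf$; the acceleration is $\dot u_j=u^k\nabla_ku_j$. Every unit timelike vector field has the canonical decomposition $\nabla_iu_j=H(g_{ij}+u_iu_j)-u_i\dot u_j+\omega_{ij}+\sigma_{ij}$, where $H=\frac{1}{n-1}\nabla_ru^r$ is the expansion, $\omega_{ij}=-\omega_{ji}$ the vorticity, $\sigma_{ij}=\sigma_{ji}$ the shear, with $g^{ij}\sigma_{ij}=0$ and $\omega_{ij}u^j=\sigma_{ij}u^j=0$. 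*)

(* Defs.v *)
(* Local (coordinate chart) formalization
   of tensor calculus on a Lorentzian manifold. *)
From HB Require Import structures.
From mathcomp Require Import all_boot all_order all_algebra.
From mathcomp Require Import all_classical all_reals all_analysis.
Set Implicit Arguments. Unset Strict Implicit. Unset Printing Implicit Defensive.
Import Order.TTheory GRing.Theory Num.Theory.
Import numFieldNormedType.Exports.
Local Open Scope ring_scope.
Local Open Scope classical_set_scope.

Section Tensors.
Variables (R : realType) (n : nat).
Local Notation V := 'rV[R]_n.

Definition pd (i : 'I_n) (f : V -> R) : V -> R :=
  fun x => 'D_(delta_mx 0 i) f x.

Fixpoint pds (s : seq 'I_n) (f : V -> R) : V -> R :=
  if s is i :: s' then pd i (pds s' f) else f.

Definition smooth_on (U : set V) (f : V -> R) : Prop :=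
  forall (s : seq 'I_n) (x : V), U x -> differentiable (pds s f) x.

Definition lorentzian (G : 'M[R]_n) : Prop :=
  G^T = G /\
  exists P : 'M[R]_n, P \in unitmx /\
    P^T *m G *m P = diag_mx (\row_(i < n) (if val i == 0%N then -1 else 1)).

Variable g : V -> 'M[R]_n.

Definition ginv (x : V) : 'M[R]_n := invmx (g x).

Definition Gam (k i j : 'I_n) (x : V) : R :=
  2^-1 * \sum_(l < n) ginv x k l *
    (pd i (fun y => g y j l) x + pd j (fun y => g y i l) x
     - pd l (fun y => g y i j) x).

Definition cov1 (w : V -> 'I_n -> R) (i j : 'I_n) (x : V) : R :=
  pd i (fun y => w y j) x - \sum_(k < n) Gam k i j x * w x k.

Definition cov2 (T : V -> 'I_n -> 'I_n -> R) (i j l : 'I_n) (x : V) : R :=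
  pd i (fun y => T y j l) x
  - \sum_(k < n) Gam k i j x * T x k l
  - \sum_(k < n) Gam k i l x * T x j k.

Definition CKT_eq (U : set V) (K : V -> 'I_n -> 'I_n -> R)
  (eta : V -> 'I_n -> R) : Prop :=
  forall x, U x -> forall i j l : 'I_n,
    cov2 K i j l x + cov2 K j l i x + cov2 K l i j x
    = eta x i * g x j l + eta x j * g x l i + eta x l * g x i j.

Definition is_CKT (U : set V) (K : V -> 'I_n -> 'I_n -> R) : Prop :=
  exists eta, CKT_eq U K eta.

Variable u : V -> 'I_n -> R.   (* vector field components u^i *)

Definition lower (x : V) (j : 'I_n) : R := \sum_(k < n) g x j k * u x k.

Definition dotf (f : V -> R) (x : V) : R := \sum_(k < n) u x k * pd k f x.

Definition accel (x : V) (j : 'I_n) : R :=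
  \sum_(k < n) u x k * cov1 lower k j x.

Definition expansion (x : V) : R :=
  (n.-1)%:R^-1 * \sum_(i < n) \sum_(j < n) ginv x i j * cov1 lower i j x.

(* shear: symmetric trace-free part of the canonical decomposition,
   sigma_ij = nabla_(i u_j) - H (g_ij + u_i u_j) + u_(i udot_j) *)
Definition shear (x : V) (i j : 'I_n) : R :=
  2^-1 * (cov1 lower i j x + cov1 lower j i x)
  - expansion x * (g x i j + lower x i * lower x j)
  + 2^-1 * (lower x i * accel x j + lower x j * accel x i).

Definition shear_free (U : set V) : Prop :=
  forall x, U x -> forall i j, shear x i j = 0.

Definition cond2 (U : set V) (B : V -> R) : Prop :=
  forall x, U x ->
    expansion x = dotf B x / (2 * B x) /\
    forall j, pd j B x = - dotf B x * lower x j + 2 * B x * accel x j.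

Definition perfect_fluid (A B : V -> R) (x : V) (j k : 'I_n) : R :=
  A x * g x j k + B x * lower x j * lower x k.

End Tensors.

(* Main.v *)
Require Import Defs.
From HB Require Import structures.
From mathcomp Require Import all_boot all_order all_algebra.
From mathcomp Require Import all_classical all_reals all_analysis.
From mathcomp Require Import ring lra.
Import Order.TTheory GRing.Theory Num.Theory.
Import numFieldNormedType.Exports.
Local Open Scope ring_scope.
Local Open Scope classical_set_scope.

Set Implicit Arguments. Unset Strict Implicit. Unset Printing Implicit Defensive.

Section Alg.
Variables (R : realFieldType) (n : nat).
Variables (G Gi W : 'I_n -> 'I_n -> R) (u b z : 'I_n -> R) (Bv : R).
Hypothesis n2 : (2 <= n)%N.
Hypothesis Gs : forall i j, G i j = G j i.
Hypothesis Gis : forall i j, Gi i j = Gi j i.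
Hypothesis GiG : forall i j, \sum_(k < n) Gi i k * G k j = (i == j)%:R.
Hypothesis Wu : forall i, \sum_(j < n) u j * W i j = 0.
Hypothesis Bv0 : Bv != 0.

Definition Lw j := \sum_(k < n) G j k * u k.
Hypothesis uL : \sum_(j < n) u j * Lw j = -1.
Definition aw j := \sum_(k < n) u k * W k j.
Definition Bdw := \sum_(k < n) u k * b k.
Definition Hw := (n.-1)%:R^-1 * \sum_(i < n) \sum_(j < n) Gi i j * W i j.
Definition sgw i j := 2^-1 * (W i j + W j i) - Hw * (G i j + Lw i * Lw j)
   + 2^-1 * (Lw i * aw j + Lw j * aw i).

Lemma two_neq0 : (2:R) != 0.
Proof. by rewrite pnatr_eq0. Qed.

Lemma sum_delta (F : 'I_n -> R) i : \sum_(j < n) F j * (j == i)%:R = F i.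
Proof.
rewrite (bigD1 i) //= eqxx mulr1 big1 ?addr0 // => j /negbTE ->; by rewrite mulr0.
Qed.

Lemma sum_delta' (F : 'I_n -> R) i : \sum_(j < n) F j * (i == j)%:R = F i.
Proof. by rewrite -(sum_delta F i); apply: eq_bigr => j _; rewrite eq_sym. Qed.

Lemma GiX_G (X : 'I_n -> R) i :
  \sum_(j < n) X j * \sum_(l < n) Gi j l * G l i = X i.
Proof. by under eq_bigr do rewrite GiG; exact: sum_delta. Qed.

Lemma GiL j : \sum_(l < n) Gi j l * Lw l = u j.
Proof.
rewrite /Lw; under eq_bigr do rewrite mulr_sumr.
rewrite exchange_big /=.
under eq_bigr do (under eq_bigr do rewrite mulrA; rewrite -mulr_suml GiG mulrC).
exact: sum_delta'.
Qed.

Lemma uG j : \sum_(l < n) u l * G j l = Lw j.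
Proof. by apply: eq_bigr => l _; rewrite mulrC. Qed.
Lemma uG' j : \sum_(l < n) u l * G l j = Lw j.
Proof. by apply: eq_bigr => l _; rewrite mulrC Gs. Qed.

Lemma ua : \sum_(j < n) u j * aw j = 0.
Proof.
rewrite /aw; under eq_bigr do rewrite mulr_sumr.
rewrite exchange_big /= big1 // => k _.
under eq_bigr do rewrite mulrCA; by rewrite -mulr_sumr Wu mulr0.
Qed.

Lemma sum2_split (F1 F2 : 'I_n -> 'I_n -> R) :
  \sum_(j < n) \sum_(l < n) (F1 j l + F2 j l) =
  \sum_(j < n) \sum_(l < n) F1 j l + \sum_(j < n) \sum_(l < n) F2 j l.
Proof. by rewrite -big_split; apply: eq_bigr => j _; rewrite big_split. Qed.

Lemma sum2_scale c (F : 'I_n -> 'I_n -> R) :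
  \sum_(j < n) \sum_(l < n) c * F j l = c * \sum_(j < n) \sum_(l < n) F j l.
Proof. by rewrite mulr_sumr; apply: eq_bigr => j _; rewrite mulr_sumr. Qed.

Lemma GiXY (X Y : 'I_n -> R) :
  \sum_(j < n) \sum_(l < n) Gi j l * (X j * Y l) =
  \sum_(j < n) X j * \sum_(l < n) Gi j l * Y l.
Proof. by apply: eq_bigr => j _; rewrite mulr_sumr; apply: eq_bigr => l _; ring. Qed.

Lemma GiXY' (X Y : 'I_n -> R) :
  \sum_(j < n) \sum_(l < n) Gi j l * (X j * Y l) =
  \sum_(l < n) Y l * \sum_(j < n) Gi l j * X j.
Proof.
rewrite exchange_big /=; apply: eq_bigr => l _; rewrite mulr_sumr.
by apply: eq_bigr => j _; rewrite Gis; ring.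
Qed.

Lemma sumXGiL (X : 'I_n -> R) :
  \sum_(j < n) X j * \sum_(l < n) Gi j l * Lw l = \sum_(j < n) X j * u j.
Proof. by apply: eq_bigr => j _; rewrite GiL. Qed.

Lemma sumXu (X : 'I_n -> R) :
  \sum_(j < n) X j * u j = \sum_(j < n) u j * X j.
Proof. by apply: eq_bigr => j _; rewrite mulrC. Qed.

Lemma GiLX (X : 'I_n -> R) :
  \sum_(j < n) \sum_(l < n) Gi j l * (Lw j * X l) = \sum_(l < n) u l * X l.
Proof. by rewrite GiXY' sumXGiL sumXu. Qed.

Lemma GiXL (X : 'I_n -> R) :
  \sum_(j < n) \sum_(l < n) Gi j l * (X j * Lw l) = \sum_(l < n) u l * X l.
Proof. by rewrite GiXY sumXGiL sumXu. Qed.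

Lemma GiXG (X : 'I_n -> R) i :
  \sum_(j < n) \sum_(l < n) Gi j l * (X j * G l i) = X i.
Proof. by rewrite GiXY GiX_G. Qed.

Lemma GiGX (X : 'I_n -> R) i :
  \sum_(j < n) \sum_(l < n) Gi j l * (G j i * X l) = X i.
Proof. by rewrite GiXY' GiX_G. Qed.

Lemma GiLL : \sum_(j < n) \sum_(l < n) Gi j l * (Lw j * Lw l) = -1.
Proof.
rewrite GiXY; under eq_bigr do rewrite GiL.
by rewrite -uL; apply: eq_bigr => j _; rewrite mulrC.
Qed.

Lemma GiGG : \sum_(j < n) \sum_(l < n) Gi j l * G j l = n%:R.
Proof.
under eq_bigr do (under eq_bigr do rewrite Gs; rewrite GiG eqxx).
by rewrite sumr_const card_ord.
Qed.


Definition Dw i j l := b i * Lw j * Lw l + Bv * (W i j * Lw l + Lw j * W i l)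
   + (b j * Lw l * Lw i + Bv * (W j l * Lw i + Lw l * W j i))
   + (b l * Lw i * Lw j + Bv * (W l i * Lw j + Lw i * W l j))
   - (z i * G j l + z j * G l i + z l * G i j).

Definition cvw (dA : 'I_n -> R) i j l :=
  dA i * G j l + b i * Lw j * Lw l + Bv * (W i j * Lw l + Lw j * W i l).

Lemma Dw_expand (dA eta : 'I_n -> R) (hz : forall a, z a = eta a - dA a) i j l :
  Dw i j l = (cvw dA i j l + cvw dA j l i + cvw dA l i j)
    - (eta i * G j l + eta j * G l i + eta l * G i j).
Proof. rewrite /Dw /cvw !hz; ring. Qed.

Definition pw i := b i + Bdw * Lw i - 2 * Bv * aw i.
Definition rw i := z i - Bdw * Lw i.
Definition ew := Bdw - 2 * Bv * Hw.
Definition puw := \sum_(l < n) u l * pw l.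
Definition ruw := \sum_(l < n) u l * rw l.

Lemma D_res i j l : Dw i j l =
  (pw i * Lw j * Lw l + pw j * Lw l * Lw i + pw l * Lw i * Lw j)
  + 2 * Bv * (sgw i j * Lw l + sgw j l * Lw i + sgw l i * Lw j)
  - ew * (G i j * Lw l + G j l * Lw i + G l i * Lw j + 3 * (Lw i * Lw j * Lw l))
  - (rw l * G i j + rw i * G j l + rw j * G l i).
Proof. by rewrite /Dw /pw /rw /ew /sgw; field. Qed.

Lemma pu0 : puw = 0.
Proof.
rewrite /puw /pw (eq_bigr (fun l => u l * b l + Bdw * (u l * Lw l) + (- 2 * Bv) * (u l * aw l)));
  last by move=> l _; ring.
by rewrite !big_split /= -!mulr_sumr uL ua /Bdw; ring.
Qed.

Lemma usg1 j : \sum_(l < n) u l * sgw j l = 0.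
Proof.
rewrite /sgw (eq_bigr (fun l => 2^-1 * (u l * W j l) + 2^-1 * (u l * W l j)
   + (- Hw) * (u l * G j l) + (- Hw * Lw j) * (u l * Lw l) + (2^-1 * Lw j) * (u l * aw l)
   + (2^-1 * aw j) * (u l * Lw l))); last by move=> l _; ring.
by rewrite !big_split /= -!mulr_sumr Wu uG uL ua; rewrite -/(aw j); by field.
Qed.

Lemma usg2 i : \sum_(l < n) u l * sgw l i = 0.
Proof.
rewrite /sgw (eq_bigr (fun l => 2^-1 * (u l * W l i) + 2^-1 * (u l * W i l)
   + (- Hw) * (u l * G l i) + (- Hw * Lw i) * (u l * Lw l) + (2^-1 * aw i) * (u l * Lw l)
   + (2^-1 * Lw i) * (u l * aw l))); last by move=> l _; ring.
by rewrite !big_split /= -!mulr_sumr Wu uG' uL ua; rewrite -/(aw i); by field.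
Qed.

Lemma C1 i j : \sum_(l < n) u l * Dw i j l =
  - pw i * Lw j - pw j * Lw i + puw * Lw i * Lw j - 2 * Bv * sgw i j
  + ew * (G i j + Lw i * Lw j) - ruw * G i j - rw i * Lw j - rw j * Lw i.
Proof.
rewrite (eq_bigr (fun l : 'I_n => ((pw i * Lw j + pw j * Lw i + 2 * Bv * sgw i j - ew * G i j
   - 3 * ew * (Lw i * Lw j)) * (u l * Lw l) + (Lw i * Lw j) * (u l * pw l)
   + (2 * Bv * Lw i) * (u l * sgw j l) + (2 * Bv * Lw j) * (u l * sgw l i)
   + (- ew * Lw i) * (u l * G j l) + (- ew * Lw j) * (u l * G l i)
   + (- G i j) * (u l * rw l) + (- rw i) * (u l * G j l) + (- rw j) * (u l * G l i)) : R));
  last by move=> l _; rewrite D_res; ring.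
rewrite !big_split /= -!mulr_sumr uL usg1 usg2 !uG' !uG -/puw -/ruw; ring.
Qed.


Lemma eqz (x y w : R) : w = 0 -> x - y = w -> x = y.
Proof. by move=> -> /eqP; rewrite subr_eq0 => /eqP. Qed.

Lemma nm1_gt0 : (0 < n.-1)%N.
Proof. by rewrite -subn1 subn_gt0. Qed.

Lemma nm1E : (n.-1)%:R = n%:R - 1 :> R.
Proof. by apply/eqP; rewrite eq_sym subr_eq natr1 prednK // ltnW. Qed.

Lemma nm1_neq0 : (n.-1)%:R != 0 :> R.
Proof. by rewrite pnatr_eq0 -lt0n nm1_gt0. Qed.

Lemma GiWt : \sum_(i < n) \sum_(j < n) Gi i j * W j i =
  \sum_(i < n) \sum_(j < n) Gi i j * W i j.
Proof.
rewrite exchange_big /=; apply: eq_bigr => i _; apply: eq_bigr => j _.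
by rewrite Gis.
Qed.

Lemma trsg : \sum_(i < n) \sum_(j < n) Gi i j * sgw i j = 0.
Proof.
rewrite (eq_bigr (fun i => \sum_(j < n) (2^-1 * (Gi i j * W i j) + 2^-1 * (Gi i j * W j i)
   + (- Hw) * (Gi i j * G i j) + (- Hw) * (Gi i j * (Lw i * Lw j))
   + 2^-1 * (Gi i j * (Lw i * aw j)) + 2^-1 * (Gi i j * (aw i * Lw j)))));
  last by move=> i _; apply: eq_bigr => j _; rewrite /sgw; ring.
rewrite !sum2_split !sum2_scale GiWt GiGG GiLL GiXY' GiXY.
rewrite !sumXGiL !sumXu ua /Hw.
have := nm1_neq0; rewrite nm1E => h.
by field.
Qed.

Lemma nec (HD : forall i j l, Dw i j l = 0) :
  (forall i j, sgw i j = 0) /\ Hw = Bdw / (2 * Bv) /\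
  (forall j, b j = - Bdw * Lw j + 2 * Bv * aw j) /\ (forall j, z j = Bdw * Lw j).
Proof.
have E1 i j : - pw i * Lw j - pw j * Lw i + puw * Lw i * Lw j - 2 * Bv * sgw i j
  + ew * (G i j + Lw i * Lw j) - ruw * G i j - rw i * Lw j - rw j * Lw i = 0.
  by rewrite -C1 big1 // => l _; rewrite HD mulr0.
have E2 i : pw i + rw i - 2 * ruw * Lw i = 0.
  have h : \sum_(j < n) u j * (- pw i * Lw j - pw j * Lw i + puw * Lw i * Lw j
      - 2 * Bv * sgw i j + ew * (G i j + Lw i * Lw j) - ruw * G i j - rw i * Lw j - rw j * Lw i) = 0.
    by rewrite big1 // => j _; rewrite E1 mulr0.
  rewrite -h (eq_bigr (fun j : 'I_n => ((- pw i + puw * Lw i + ew * Lw i - rw i) * (u j * Lw j)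
     + (- Lw i) * (u j * pw j) + (- 2 * Bv) * (u j * sgw i j) + (ew - ruw) * (u j * G i j)
     + (- Lw i) * (u j * rw j)) : R)); last by move=> j _; ring.
  rewrite !big_split /= -!mulr_sumr uL usg1 uG -/puw -/ruw pu0; ring.
have ru0 : ruw = 0.
  have h : \sum_(i < n) u i * (pw i + rw i - 2 * ruw * Lw i) = 0.
    by rewrite big1 // => i _; rewrite E2 mulr0.
  move: h; rewrite (eq_bigr (fun i : 'I_n => (u i * pw i + u i * rw i
     + (- 2 * ruw) * (u i * Lw i)) : R)); last by move=> i _; ring.
  rewrite !big_split /= -!mulr_sumr uL -/puw -/ruw pu0 => h; lra.
have rp i : rw i = - pw i.
  by have := E2 i; rewrite ru0 => h; apply: (eqz h); ring.
have E1' i j : ew * (G i j + Lw i * Lw j) = 2 * Bv * sgw i j.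
  by have := E1 i j; rewrite pu0 ru0 !rp => h; apply: (eqz h); ring.
have e0 : ew = 0.
  have h : \sum_(i < n) \sum_(j < n) Gi i j * (ew * (G i j + Lw i * Lw j)) =
           \sum_(i < n) \sum_(j < n) (2 * Bv) * (Gi i j * sgw i j).
    by apply: eq_bigr => i _; apply: eq_bigr => j _; rewrite E1'; ring.
  move: h; rewrite sum2_scale trsg mulr0.
  rewrite (eq_bigr (fun i => \sum_(j < n) (ew * (Gi i j * G i j) + ew * (Gi i j * (Lw i * Lw j)))));
    last by move=> i _; apply: eq_bigr => j _; ring.
  rewrite sum2_split !sum2_scale GiGG GiLL => h.
  have : ew * (n.-1)%:R = 0 by rewrite nm1E; apply: (eqz h); ring.
  by move/eqP; rewrite mulf_eq0 (negbTE nm1_neq0) orbF => /eqP.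
have sg0 i j : sgw i j = 0.
  have := E1' i j; rewrite e0 mul0r => /esym/eqP.
  by rewrite !mulf_eq0 (negbTE Bv0) (negbTE two_neq0) /= => /eqP.
have p0 i : pw i = 0.
  have h : \sum_(j < n) \sum_(l < n) Gi j l * Dw i j l = 0.
    by rewrite big1 // => j _; rewrite big1 // => l _; rewrite HD mulr0.
  move: h.
  rewrite (eq_bigr (fun j => \sum_(l < n) (pw i * (Gi j l * (Lw j * Lw l))
     + Lw i * (Gi j l * (pw j * Lw l)) + Lw i * (Gi j l * (Lw j * pw l))
     + 1 * (Gi j l * (pw j * G l i)) + 1 * (Gi j l * (G j i * pw l))
     + pw i * (Gi j l * G j l))));
    last by move=> j _; apply: eq_bigr => l _; rewrite D_res !sg0 e0 !rp; rewrite (Gs i j) (Gs l i); ring.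
  rewrite !sum2_split !sum2_scale GiLL GiGG GiLX GiXL GiXG GiGX -/puw pu0 => h.
  have : pw i * (n.+1)%:R = 0 by rewrite -natr1; apply: (eqz h); ring.
  by move/eqP; rewrite mulf_eq0 pnatr_eq0 orbF => /eqP.
split=> //; split.
  move: e0; rewrite /ew => /eqP; rewrite subr_eq0 => /eqP ->; field; exact: Bv0.
split=> j.
  by have := p0 j; rewrite /pw => h; apply: (eqz h); ring.
by have := rp j; rewrite p0 oppr0 /rw => /eqP; rewrite subr_eq0 => /eqP.
Qed.

Lemma suf (hs : forall i j, sgw i j = 0) (hH : Hw = Bdw / (2 * Bv))
  (hb : forall j, b j = - Bdw * Lw j + 2 * Bv * aw j) (hz : forall j, z j = Bdw * Lw j) :
  forall i j l, Dw i j l = 0.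
Proof.
have p0 j : pw j = 0 by rewrite /pw hb; ring.
have r0 j : rw j = 0 by rewrite /rw hz; ring.
have e0 : ew = 0 by rewrite /ew hH; field.
by move=> i j l; rewrite D_res !p0 !r0 !hs e0; ring.
Qed.

End Alg.

Section Alg2.
Variables (R : realFieldType) (n : nat).
Variables (G Gi : 'I_n -> 'I_n -> R) (u : 'I_n -> R).
Variables (T : 'I_n -> 'I_n -> 'I_n -> R) (du : 'I_n -> 'I_n -> R).
Hypothesis Gs : forall i j, G i j = G j i.
Hypothesis Gis : forall i j, Gi i j = Gi j i.
Hypothesis GiG : forall i j, \sum_(k < n) Gi i k * G k j = (i == j)%:R.

Lemma GamG (Q : 'I_n -> R) l :
  \sum_(k < n) (2^-1 * \sum_(m < n) Gi k m * Q m) * G k l = 2^-1 * Q l.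
Proof.
under eq_bigr do rewrite -mulrA mulr_suml.
rewrite -mulr_sumr exchange_big /=; congr (_ * _).
rewrite (eq_bigr (fun m => Q m * (m == l)%:R)); first exact: sum_delta.
move=> m _; rewrite -GiG mulr_sumr; apply: eq_bigr => k _; rewrite (Gis k m); ring.
Qed.

Lemma GamL (Q : 'I_n -> R) :
  \sum_(k < n) (2^-1 * \sum_(m < n) Gi k m * Q m) * (\sum_(m < n) G k m * u m) =
  \sum_(m < n) 2^-1 * (u m * Q m).
Proof.
under eq_bigr do rewrite mulr_sumr.
rewrite exchange_big /=; apply: eq_bigr => m _.
rewrite (eq_bigr (fun k => u m * ((2^-1 * \sum_(m0 < n) Gi k m0 * Q m0) * G k m))).
  by rewrite -mulr_sumr GamG; ring.
by move=> k _; ring.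
Qed.

Lemma sum2_swap0 (F : 'I_n -> 'I_n -> R) :
  \sum_(j < n) \sum_(k < n) (F j k - F k j) = 0.
Proof.
rewrite (eq_bigr (fun j => \sum_(k < n) F j k - \sum_(k < n) F k j));
  last by move=> j _; rewrite sumrB.
by rewrite sumrB exchange_big /= subrr.
Qed.

Lemma Wu_alg i
  (hN : \sum_(j < n) \sum_(k < n) (T i j k * u j * u k + G j k * du i j * u k
          + G j k * u j * du i k) = 0) :
  \sum_(j < n) u j * (\sum_(k < n) (T i j k * u k + G j k * du i k)
     - \sum_(k < n) (2^-1 * \sum_(m < n) Gi k m * (T i j m + T j i m - T m i j))
        * (\sum_(m < n) G k m * u m)) = 0.
Proof.
under eq_bigr do rewrite GamL -sumrB mulr_sumr.
have -> : \sum_(j < n) \sum_(k < n) u j * ((T i j k * u k + G j k * du i k)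
    - 2^-1 * (u k * (T i j k + T j i k - T k i j))) =
  \sum_(j < n) \sum_(k < n) (2^-1 * (T i j k * u j * u k + G j k * du i j * u k
          + G j k * u j * du i k)
    + 2^-1 * ((u j * u k * T k i j) - (u k * u j * T j i k))
    + 2^-1 * ((u j * G j k * du i k) - (u k * G k j * du i j))).
  by apply: eq_bigr => j _; apply: eq_bigr => k _; rewrite (Gs k j); field.
by rewrite !sum2_split !sum2_scale !sum2_swap0 hN; field.
Qed.

End Alg2.

Section An.
Variables (R : realType) (n : nat).
Local Notation V := 'rV[R]_n.

Lemma dv_smooth (U : set V) f x i : smooth_on U f -> U x -> derivable f x (delta_mx 0 i).
Proof. by move=> sf Ux; apply: diff_derivable; exact: (sf [::] x Ux). Qed.

Lemma pdM (f h : V -> R) i x : derivable f x (delta_mx 0 i) -> derivable h x (delta_mx 0 i) ->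
  pd i (fun y => f y * h y) x = f x * pd i h x + h x * pd i f x.
Proof. by move=> df dh; rewrite /pd (deriveM df dh). Qed.

Lemma dvM (f h : V -> R) x v : derivable f x v -> derivable h x v ->
  derivable (fun y => f y * h y) x v.
Proof. by move=> df dh; exact: derivableM. Qed.

Lemma pdD (f h : V -> R) i x : derivable f x (delta_mx 0 i) -> derivable h x (delta_mx 0 i) ->
  pd i (fun y => f y + h y) x = pd i f x + pd i h x.
Proof. by move=> df dh; rewrite /pd (deriveD df dh). Qed.

Lemma dvD (f h : V -> R) x v : derivable f x v -> derivable h x v ->
  derivable (fun y => f y + h y) x v.
Proof. by move=> df dh; exact: derivableD. Qed.

Lemma pd_sum (F : 'I_n -> V -> R) i x : (forall k, derivable (F k) x (delta_mx 0 i)) ->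
  pd i (fun y => \sum_(k < n) F k y) x = \sum_(k < n) pd i (F k) x.
Proof. by move=> dF; rewrite /pd -fct_sumE derive_sum. Qed.

Lemma dv_sum (F : 'I_n -> V -> R) x v : (forall k, derivable (F k) x v) ->
  derivable (fun y => \sum_(k < n) F k y) x v.
Proof. by move=> dF; rewrite -fct_sumE; exact: derivable_sum. Qed.

Lemma pd_near (f h : V -> R) i x : (\near x, f x = h x) -> pd i f x = pd i h x.
Proof. by move=> fh; rewrite /pd; apply: near_eq_derive. Qed.

Lemma pd_cst (c : R) i x : pd i (fun _ : V => c) x = 0.
Proof. by rewrite /pd derive_cst. Qed.

End An.

Section Geo.
Variables (R : realType) (n : nat) (U : set 'rV[R]_n).
Variables (g : 'rV[R]_n -> 'M[R]_n) (u : 'rV[R]_n -> 'I_n -> R) (A B : 'rV[R]_n -> R).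
Hypothesis oU : open U.
Hypothesis smg : forall i j : 'I_n, smooth_on U (fun x => g x i j).
Hypothesis lor : forall x, U x -> lorentzian (g x).
Hypothesis smu : forall i : 'I_n, smooth_on U (fun x => u x i).
Hypothesis nu : forall x, U x -> \sum_(i < n) \sum_(j < n) g x i j * u x i * u x j = -1.
Hypothesis sA : smooth_on U A.
Hypothesis sB : smooth_on U B.
Variable x : 'rV[R]_n.
Hypothesis Ux : U x.

Lemma nearU : \forall y \near x, U y.
Proof. by apply: open_nbhs_nbhs; split. Qed.

Lemma gsym y : U y -> forall i j, g y i j = g y j i.
Proof.
by case/lor => h _ i j; rewrite -{1}h mxE.
Qed.

Lemma gunit : g x \in unitmx.
Proof.
case: (lor Ux) => _ [P [_ hP]].
rewrite unitmxE unitfE.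
have : \det (P^T *m g x *m P) != 0.
  rewrite hP det_diag; apply/prodf_neq0 => i _.
  by rewrite mxE; case: ifP => _; rewrite ?oppr_eq0 oner_eq0.
by rewrite !det_mulmx det_tr; apply: contraNneq => ->; rewrite mulr0 mul0r.
Qed.

Lemma GiG_x i j : \sum_(k < n) ginv g x i k * g x k j = (i == j)%:R.
Proof.
have := mulVmx gunit; move/matrixP/(_ i j); rewrite !mxE => <-.
by apply: eq_bigr.
Qed.

Lemma Gis_x i j : ginv g x i j = ginv g x j i.
Proof.
have h : (ginv g x)^T = ginv g x.
  by rewrite /ginv trmx_inv; case: (lor Ux) => -> _.
by rewrite -{1}h mxE.
Qed.

Lemma dvg i j k : derivable (fun y => g y i j) x (delta_mx 0 k).
Proof. exact: dv_smooth (smg i j) Ux. Qed.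
Lemma dvu i k : derivable (fun y => u y i) x (delta_mx 0 k).
Proof. exact: dv_smooth (smu i) Ux. Qed.

Lemma dvL j i : derivable (fun y => lower g u y j) x (delta_mx 0 i).
Proof. by apply: dv_sum => k; apply: dvM; [exact: dvg|exact: dvu]. Qed.

Lemma dL i j : pd i (fun y => lower g u y j) x =
  \sum_(k < n) (pd i (fun y => g y j k) x * u x k + g x j k * pd i (fun y => u y k) x).
Proof.
rewrite /lower pd_sum; last by move=> k; apply: dvM; [exact: dvg|exact: dvu].
apply: eq_bigr => k _; rewrite pdM; [|exact: dvg|exact: dvu].
by rewrite addrC; congr (_ + _); rewrite mulrC.
Qed.

Lemma Tsym i j l : pd i (fun y => g y j l) x = pd i (fun y => g y l j) x.
Proof.
apply: pd_near; apply: filterS nearU => y Uy; exact: gsym.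
Qed.


Lemma GamG_x i j l : \sum_(k < n) Gam g k i j x * g x k l =
  2^-1 * (pd i (fun y => g y j l) x + pd j (fun y => g y i l) x - pd l (fun y => g y i j) x).
Proof.
exact: (GamG Gis_x GiG_x (fun m => pd i (fun y => g y j m) x + pd j (fun y => g y i m) x
   - pd m (fun y => g y i j) x) l).
Qed.

Lemma mc i j l : pd i (fun y => g y j l) x =
  \sum_(k < n) Gam g k i j x * g x k l + \sum_(k < n) Gam g k i l x * g x j k.
Proof.
rewrite [X in _ + X](eq_bigr (fun k => Gam g k i l x * g x k j)); last by move=> k _; rewrite (gsym Ux j k).
rewrite !GamG_x (Tsym i l j); by field.
Qed.

Lemma dvK i j l : derivable (fun y => B y * lower g u y j * lower g u y l) x (delta_mx 0 i).
Proof. by apply: dvM; [apply: dvM; [exact: dv_smooth sB Ux|exact: dvL]|exact: dvL]. Qed.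

Lemma covK i j l : cov2 g (perfect_fluid g u A B) i j l x =
  pd i A x * g x j l + pd i B x * lower g u x j * lower g u x l
  + B x * (cov1 g (lower g u) i j x * lower g u x l
           + lower g u x j * cov1 g (lower g u) i l x).
Proof.
rewrite /cov2 /perfect_fluid.
rewrite (pdD (f := fun y => A y * g y j l) (h := fun y => B y * lower g u y j * lower g u y l));
  last exact: dvK; last by apply: dvM; [exact: dv_smooth sA Ux|exact: dvg].
rewrite (pdM (f := A) (h := fun y => g y j l)); [|exact: dv_smooth sA Ux|exact: dvg].
rewrite (pdM (f := fun y => B y * lower g u y j) (h := fun y => lower g u y l));
  [|by apply: dvM; [exact: dv_smooth sB Ux|exact: dvL]|exact: dvL].
rewrite (pdM (f := B) (h := fun y => lower g u y j)); [|exact: dv_smooth sB Ux|exact: dvL].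
rewrite (eq_bigr (fun k => A x * (Gam g k i j x * g x k l)
    + (B x * lower g u x l) * (Gam g k i j x * lower g u x k)));
  last by move=> k _; ring.
rewrite [X in _ - X](eq_bigr (fun k => A x * (Gam g k i l x * g x j k)
    + (B x * lower g u x j) * (Gam g k i l x * lower g u x k)));
  last by move=> k _; ring.
rewrite !big_split /= -!mulr_sumr /cov1 (mc i j l); ring.
Qed.


Lemma dN i : \sum_(j < n) \sum_(k < n)
  (pd i (fun y => g y j k) x * u x j * u x k
   + g x j k * pd i (fun y => u y j) x * u x k
   + g x j k * u x j * pd i (fun y => u y k) x) = 0.
Proof.
have h0 : pd i (fun y => \sum_(j < n) \sum_(k < n) g y j k * u y j * u y k) x = 0.
  rewrite (pd_near (h := fun _ => -1)); first exact: pd_cst.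
  by apply: filterS nearU => y Uy /=; exact: nu.
rewrite -[RHS]h0 pd_sum; last first.
  move=> j; apply: dv_sum => k.
  by apply: dvM; [apply: dvM; [exact: dvg|exact: dvu]|exact: dvu].
apply: eq_bigr => j _; rewrite pd_sum; last first.
  by move=> k; apply: dvM; [apply: dvM; [exact: dvg|exact: dvu]|exact: dvu].
apply: eq_bigr => k _.
rewrite (pdM (f := fun y => g y j k * u y j) (h := fun y => u y k)); last exact: dvu;
  last by apply: dvM; [exact: dvg|exact: dvu].
rewrite (pdM (f := fun y => g y j k) (h := fun y => u y j)); [|exact: dvg|exact: dvu].
ring.
Qed.

Lemma Wu_x i : \sum_(j < n) u x j * cov1 g (lower g u) i j x = 0.
Proof.
rewrite /cov1; under eq_bigr do rewrite dL.
exact: (Wu_alg (T := fun a b c => pd a (fun y => g y b c) x)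
  (du := fun a b => pd a (fun y => u y b) x) (gsym Ux) Gis_x GiG_x (dN i)).
Qed.


Hypothesis n2 : (2 <= n)%N.
Hypothesis Bx0 : B x != 0.

Local Notation K := (perfect_fluid g u A B).

Lemma uL_x : \sum_(j < n) u x j * Lw (fun a b => g x a b) (u x) j = -1.
Proof.
rewrite -(nu Ux); apply: eq_bigr => j _; rewrite /Lw mulr_sumr.
by apply: eq_bigr => k _; ring.
Qed.

Lemma pt_equiv (eta : 'rV[R]_n -> 'I_n -> R) :
  (forall i j l, cov2 g K i j l x + cov2 g K j l i x + cov2 g K l i j x
     = eta x i * g x j l + eta x j * g x l i + eta x l * g x i j)
  <-> (forall i j l, Dw (fun a b => g x a b) (fun a b => cov1 g (lower g u) a b x) (u x)
        (fun a => pd a B x) (fun a => eta x a - pd a A x) (B x) i j l = 0).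
Proof.
split=> h i j l.
  have hh := h i j l; move/eqP: hh; rewrite -subr_eq0 => /eqP hh.
  rewrite (@Dw_expand R n (fun a b => g x a b) (fun a b => cov1 g (lower g u) a b x) (u x) (fun a => pd a B x) (fun a => eta x a - pd a A x) (B x) (fun a => pd a A x) (eta x) (fun a => erefl)).
  by rewrite !covK in hh; exact: hh.
apply/eqP; rewrite -subr_eq0; apply/eqP.
have := h i j l; rewrite (@Dw_expand R n (fun a b => g x a b) (fun a b => cov1 g (lower g u) a b x) (u x) (fun a => pd a B x) (fun a => eta x a - pd a A x) (B x) (fun a => pd a A x) (eta x) (fun a => erefl)) => hh.
by rewrite !covK; exact: hh.
Qed.

Lemma pt_nec (eta : 'rV[R]_n -> 'I_n -> R) :
  (forall i j l, cov2 g K i j l x + cov2 g K j l i x + cov2 g K l i j x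
     = eta x i * g x j l + eta x j * g x l i + eta x l * g x i j) ->
  (forall i j, shear g u x i j = 0) /\
  expansion g u x = dotf u B x / (2 * B x) /\
  (forall j, pd j B x = - dotf u B x * lower g u x j + 2 * B x * accel g u x j) /\
  (forall j, eta x j = pd j A x + dotf u B x * lower g u x j).
Proof.
move/pt_equiv => hD.
have := @nec R n (fun a b => g x a b) (fun a b => ginv g x a b)
  (fun a b => cov1 g (lower g u) a b x) (u x) (fun a => pd a B x)
  (fun a => eta x a - pd a A x) (B x) n2 (gsym Ux) Gis_x GiG_x Wu_x Bx0 uL_x hD.
move=> [hs [hH [hb hz]]].
split; first exact: hs.
split; first exact: hH.
split; first exact: hb.
move=> j; have := hz j => /= hzj.
by apply/eqP; rewrite addrC -subr_eq; apply/eqP; exact: hzj.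
Qed.

Lemma pt_suf (eta : 'rV[R]_n -> 'I_n -> R) :
  (forall i j, shear g u x i j = 0) ->
  expansion g u x = dotf u B x / (2 * B x) ->
  (forall j, pd j B x = - dotf u B x * lower g u x j + 2 * B x * accel g u x j) ->
  (forall j, eta x j = pd j A x + dotf u B x * lower g u x j) ->
  (forall i j l, cov2 g K i j l x + cov2 g K j l i x + cov2 g K l i j x
     = eta x i * g x j l + eta x j * g x l i + eta x l * g x i j).
Proof.
move=> hs hH hb hz; apply/pt_equiv.
apply: (suf (G := fun a b => g x a b) (Gi := fun a b => ginv g x a b)
  (W := fun a b => cov1 g (lower g u) a b x) Bx0 hs hH hb).
by move=> j /=; rewrite hz addrAC subrr add0r.
Qed.

End Geo.

Unset Implicit Arguments.

Theorem theorem1 (R : realType) (n : nat) (U : set 'rV[R]_n)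
  (g : 'rV[R]_n -> 'M[R]_n) (u : 'rV[R]_n -> 'I_n -> R)
  (A B : 'rV[R]_n -> R) :
  (2 <= n)%N -> open U ->
  (forall i j : 'I_n, smooth_on U (fun x => g x i j)) ->
  (forall x, U x -> lorentzian (g x)) ->
  (forall i : 'I_n, smooth_on U (fun x => u x i)) ->
  (forall x, U x -> \sum_(i < n) \sum_(j < n) g x i j * u x i * u x j = -1) ->
  smooth_on U A -> smooth_on U B ->
  (forall x, U x -> B x != 0) ->
  (is_CKT g U (perfect_fluid g u A B) <->
     shear_free g u U /\ cond2 g u U B) /\
  (shear_free g u U /\ cond2 g u U B ->
     forall eta : 'rV[R]_n -> 'I_n -> R,
       CKT_eq g U (perfect_fluid g u A B) eta <->
       (forall x, U x -> forall j : 'I_n,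
          eta x j = pd j A x + dotf u B x * lower g u x j)).
Proof.
move=> n2 oU smg lor smu nu sA sB B0.
split.
  split.
    case=> eta hE; split.
      move=> x Ux i j.
      have hEx := hE x Ux.
      have := @pt_nec R n U g u A B oU smg lor smu nu sA sB x Ux n2 (B0 x Ux) eta hEx.
      by case=> hs _; exact: hs.
    move=> x Ux.
    have := @pt_nec R n U g u A B oU smg lor smu nu sA sB x Ux n2 (B0 x Ux) eta (hE x Ux).
    by case=> _ [hH [hb _]]; split.
  case=> hsf hc; exists (fun x j => pd j A x + dotf u B x * lower g u x j).
  move=> x Ux; have [hH hb] := hc x Ux.
  exact: (@pt_suf R n U g u A B oU smg lor smu sA sB x Ux (B0 x Ux)
    (fun x j => pd j A x + dotf u B x * lower g u x j) (hsf x Ux) hH hb (fun j => erefl)).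
case=> hsf hc eta; split.
  move=> hE x Ux j.
  have := @pt_nec R n U g u A B oU smg lor smu nu sA sB x Ux n2 (B0 x Ux) eta (hE x Ux).
  by case=> _ [_ [_ hz]]; exact: hz.
move=> hz x Ux; have [hH hb] := hc x Ux.
exact: (@pt_suf R n U g u A B oU smg lor smu sA sB x Ux (B0 x Ux) eta (hsf x Ux) hH hb (hz x Ux)).
Qed.
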